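(* Let $t$ be an integer, $G$ a finite graph and $(T,Q,\alpha,\beta,R)$ an NLC-decomposition of $G$ with $|Q|\le t$. Let $y$ be a non-root node of $T$, let $p$ be its parent, and let $C=V(T_{y\mid p})\cap V(G)$ and $D=V(T_{p\mid y})\cap V(G)$. For every $q\in Q$ let $U_q=\{u\in C:\beta(\{y,u\})(\alpha(u))=q\}$. Then $(U_q)_{q\in Q}$ is a $D$-twin partition of $C$.
   Context: An NLC-decomposition of $G$ is a tuple $(T,Q,\alpha,\beta,R)$ where $T$ is a rooted binary tree (each node has at most one left child and at most one right child) whose leaf set is $V(G)$, $Q$ is a finite set of labels, $\alpha:V(G)\to Q$, $\beta$ assigns to each 2-element subset of $V(T)$ a function $Q\to Q$, and $R$ assigns to each node a subset of $Q\times Q$, such that: (nlc1) for distinct $u,v$ with $u$ an ancestor of $v$ and $u=u_0,u_1,\dots,u_n=v$ the $u$-$v$ path in $T$, $\beta(\{u_0,u_1\})\circ\cdots\circ\beta(\{u_{n-1},u_n\})=\beta(\{u,v\})$; (nlc2) for distinct $x,y\in V(G)$ with lowest common ancestor $u$, $x$ a descendant of the left child and $y$ of the right child of $u$: $xy\in E(G)$ iff $(\beta(\{u,x\})(\alpha(x)),\beta(\{u,y\})(\alpha(y)))\in R(u)$. Convention: $\beta(\{u,u\})$ is the identity map on $Q$. For an edge $ab$ of $T$, $T_{a\mid b}$ is the component of $a$ in $T-ab$. For a partition $\{C,D\}$ of $V(G)$, a $D$-twin partition of $C$ is a partition of $C$ (parts may be empty) such that any two vertices in a common part have the same neighbourhood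 in $D$. *)

(* Defs.v *)
From mathcomp Require Import all_boot.
Set Implicit Arguments. Unset Strict Implicit. Unset Printing Implicit Defensive.

(* A rooted binary tree on the finite node type N is given by a root [r],
   a parent map [par] (with [par r = r]) and a side map [side]
   ([true] = left child, [false] = right child). *)
Definition rooted_binary_tree (N : finType) (r : N) (par : N -> N)
  (side : N -> bool) : Prop :=
  [/\ par r = r,
      (forall v, exists k, iter k par v = r) &
      (forall c1 c2, c1 != r -> c2 != r -> par c1 = par c2 ->
         side c1 = side c2 -> c1 = c2)].

Definition is_child (N : finType) (r : N) (par : N -> N) (c u : N) : bool :=
  (c != r) && (par c == u).

Definition is_leaf (N : finType) (r : N) (par : N -> N) (u : N) : bool :=
  [forall c, ~~ is_child r par c u].

Definition descendant (N : finType) (par : N -> N) (x u : N) : Prop :=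
  exists k, iter k par x = u.

(* beta on pairs, with the convention beta({u,u}) = id *)
Definition bt (N Q : finType) (beta : N -> N -> Q -> Q) (u v : N) : Q -> Q :=
  if u == v then id else beta u v.

(* composition beta{u0,u1} o ... o beta{u_{k-1},u_k} along the path
   u0 = iter k par v, ..., u_k = v *)
Fixpoint pathcomp (N Q : finType) (par : N -> N) (beta : N -> N -> Q -> Q)
  (k : nat) (v : N) : Q -> Q :=
  match k with
  | 0 => id
  | k'.+1 => fun q => pathcomp par beta k' (par v) (bt beta (par v) v q)
  end.

Definition NLC_decomposition (N Q : finType) (VG : {set N}) (E : rel N)
  (r : N) (par : N -> N) (side : N -> bool) (alpha : N -> Q)
  (beta : N -> N -> Q -> Q) (R : N -> rel Q) : Prop :=
  [/\ rooted_binary_tree r par side,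
      (forall u, is_leaf r par u = (u \in VG)),
      (* beta is indexed by 2-element subsets *)
      (forall u v, beta u v = beta v u),
      (forall v k, 0 < k -> uniq (traject par v k.+1) ->
         pathcomp par beta k v =1 bt beta (iter k par v) v) &
      (forall x y u cl cr, x \in VG -> y \in VG -> x != y ->
         is_child r par cl u -> is_child r par cr u ->
         side cl = true -> side cr = false ->
         descendant par x cl -> descendant par y cr ->
         E x y = R u (bt beta u x (alpha x)) (bt beta u y (alpha y)))].

Definition tadj (N : finType) (par : N -> N) : rel N :=
  fun u v => (u != v) && ((par u == v) || (par v == u)).

(* T_{a|b}: component of a in T - ab *)
Definition comp_minus_edge (N : finType) (par : N -> N) (a b : N) : {set N} :=
  [set z | connect (fun u v => tadj par u v && ([set u; v] != [set a; b])) a z].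

(* (U q)_q is a D-twin partition of C (parts may be empty) *)
Definition twin_partition (N Q : finType) (E : rel N) (C D : {set N})
  (U : Q -> {set N}) : Prop :=
  [/\ \bigcup_(q : Q) U q = C,
      (forall q q', q != q' -> [disjoint U q & U q']) &
      (forall q u v, u \in U q -> v \in U q ->
         forall d, d \in D -> E u d = E v d)].

(* Main.v *)
Require Import Defs.
From mathcomp Require Import all_boot.
From Stdlib Require Import Classical.
Set Implicit Arguments. Unset Strict Implicit.

Lemma min_ex (P : nat -> Prop) : (exists n, P n) ->
  exists n, P n /\ forall m, m < n -> ~ P m.
Proof.
case=> n; elim/ltn_ind: n => n IH Pn.
case: (classic (exists m, m < n /\ P m)) => [[m [lt Pm]]|H].
  exact: IH lt Pm.
exists n; split => // m lt Pm; apply: H; exists m; split => //.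
Qed.

Section T.
Variables (N : finType) (r : N) (par : N -> N).
Hypothesis parr : par r = r.
Hypothesis reach : forall v, exists k, iter k par v = r.

Lemma iter_r s : iter s par r = r.
Proof. by elim: s => //= s ->. Qed.

Lemma iter_after x k n : iter k par x = r -> k <= n -> iter n par x = r.
Proof. by move=> H /subnK <-; rewrite iterD H iter_r. Qed.

Lemma cycle_r x j : 0 < j -> iter j par x = x -> x = r.
Proof.
move=> j0 Hj; have [m Hm] := reach x.
have H : forall m, iter (j * m) par x = x.
  by elim=> [|m' IH]; rewrite ?muln0 // mulnS iterD IH Hj.
rewrite -{1}(H m).
exact: (iter_after Hm (leq_pmull _ j0)).
Qed.

Lemma uniq_traj x n : 0 < n -> iter n.-1 par x != r -> uniq (traject par x n.+1).
Proof.
move=> n0 Hn; apply/negPn/negP => /(uniqPn x) [a [b [ab bs]]].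
rewrite size_traject in bs.
rewrite !nth_traject //; last by apply: ltn_trans bs.
move=> Hab; have Ha : iter a par x = r.
  apply: (@cycle_r _ (b - a)); first by rewrite subn_gt0.
  by rewrite -iterD subnK // ltnW.
move/negP: Hn; apply; apply/eqP; apply: iter_after Ha _.
by rewrite -ltnS prednK //; apply: leq_trans ab _; rewrite -ltnS.
Qed.

Lemma conn_closed (e : rel N) (S : N -> Prop) x z :
  (forall a b, S a -> e a b -> S b) -> S x -> connect e x z -> S z.
Proof.
move=> Hcl Sx /connectP [s Hp ->].
elim: s x Sx Hp => [|a s IH] x Sx //= /andP [exa Hp].
exact: IH _ (Hcl _ _ Sx exa) Hp.
Qed.

Lemma compC y z : z \in comp_minus_edge par y (par y) -> descendant par z y.
Proof.
rewrite inE => H; apply: (conn_closed (S := fun z => descendant par z y) _ _ H); last by exists 0.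
move=> a b [k Hk] /andP [/andP [ab /orP [/eqP pa|/eqP pb]] Hs].
  case: k Hk => [|k] Hk.
    by rewrite /= in Hk; move: Hs; rewrite -pa Hk eqxx.
  by exists k; rewrite -pa -iterSr.
by exists k.+1; rewrite iterSr pb.
Qed.

Lemma compD y z : y != r -> z \in comp_minus_edge par (par y) y -> ~ descendant par z y.
Proof.
move=> yr; rewrite inE => H; apply: (conn_closed (S := fun z => ~ descendant par z y) _ _ H).
  move=> a b Ha /andP [/andP [ab /orP [/eqP pa|/eqP pb]] Hs] [k Hk].
    by apply: Ha; exists k.+1; rewrite iterSr pa.
  case: k Hk => [|k] Hk.
    by move: Hs; rewrite /= in Hk; rewrite -pb Hk setUC eqxx.
  by apply: Ha; exists k; rewrite -pb -iterSr.
move=> [k Hk]; move/negP: yr; apply; apply/eqP.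
by apply: (@cycle_r _ k.+1) => //; rewrite iterSr.
Qed.
End T.

Lemma pathcompD (N Q : finType) (par : N -> N) (beta : N -> N -> Q -> Q) a b x q :
  pathcomp par beta (a + b) x q = pathcomp par beta b (iter a par x) (pathcomp par beta a x q).
Proof.
elim: a x q => [|a IH] x q //=.
by rewrite IH -iterSr.
Qed.

Theorem lemma6p4 (t : nat) (N Q : finType) (VG : {set N}) (E : rel N)
  (r : N) (par : N -> N) (side : N -> bool) (alpha : N -> Q)
  (beta : N -> N -> Q -> Q) (R : N -> rel Q) :
  symmetric E -> irreflexive E ->
  NLC_decomposition VG E r par side alpha beta R ->
  #|Q| <= t ->
  forall y : N, y != r ->
  let p := par y in
  let C := comp_minus_edge par y p :&: VG in
  let D := comp_minus_edge par p y :&: VG in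
  twin_partition E C D
    (fun q => [set u in C | bt beta y u (alpha u) == q]).
Proof.
move=> Esym Eirr [[parr reach side_inj] leafP _ nlc1 nlc2] _ y yr p C D.
split.
- apply/setP => x; apply/bigcupP/idP => [[q _]|xC]; first by rewrite inE => /andP[].
  by exists (bt beta y x (alpha x)) => //; rewrite inE xC eqxx.
- move=> q q' qq'; rewrite -setI_eq0; apply/eqP/setP => x; rewrite !inE.
  apply/negbTE/negP => /and3P [/andP [_ /eqP e1] _ /eqP e2].
  by move/negP: qq'; apply; rewrite -e1 e2.
move=> q u v /setIdP [uC /eqP uq] /setIdP [vC /eqP vq] d dD.
move: dD; rewrite inE => /andP [dcomp dVG].
have dny : ~ descendant par d y := compD parr reach yr dcomp.
have exj : exists j, 0 < j /\ descendant par d (iter j par y).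
  have [m Hm] := reach y; exists m; split.
    by case: m Hm => [Hm|//]; move/eqP: yr; rewrite -Hm.
  by rewrite Hm; apply: reach.
have [j [[j0 dj] jmin]] := min_ex exj.
pose w := iter j par y; pose c1 := iter j.-1 par y.
have pc1 : par c1 = w by rewrite /c1 /w -iterS prednK.
have c1r : c1 != r.
  apply/eqP => c1r; case: (posnP j.-1) => j1.
    by move/eqP: yr; apply; rewrite -c1r /c1 j1.
  apply: (jmin j.-1); first by rewrite ltn_predL.
  split => //; have -> : iter j.-1 par y = iter j par y.
    by rewrite -/c1 -/w -pc1 c1r parr.
  exact: dj.
have wnl : ~~ is_leaf r par w.
  rewrite /is_leaf negb_forall; apply/existsP; exists c1; by rewrite /is_child c1r pc1 eqxx.
have dw : d != w by apply/eqP => dw; move: wnl; rewrite -dw leafP dVG.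
have [k [dk kmin]] := min_ex (P := fun k => iter k par d = w) dj.
have k0 : 0 < k by case: k dk {kmin} => [dk|//]; move/eqP: dw.
pose c2 := iter k.-1 par d.
have pc2 : par c2 = w by rewrite /c2 -iterS prednK.
have c2r : c2 != r.
  apply/eqP => c2r; apply: (kmin k.-1); first by rewrite ltn_predL.
  by rewrite -/c2 -pc2 c2r parr.
have c2c1 : c2 != c1.
  apply/eqP => c21; case: (posnP j.-1) => j1.
    by apply: dny; exists k.-1; rewrite -/c2 c21 /c1 j1.
  apply: (jmin j.-1); first by rewrite ltn_predL.
  by split => //; exists k.-1; rewrite -/c2 c21.
have sides : side c1 != side c2.
  apply/negP => /eqP s12; move/eqP: c2c1; apply; apply: side_inj => //.
  by rewrite pc1 pc2.
have key : forall x, x \in C -> E x d =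
   (if side c1 then R w (pathcomp par beta j y (bt beta y x (alpha x))) (bt beta w d (alpha d))
    else R w (bt beta w d (alpha d)) (pathcomp par beta j y (bt beta y x (alpha x)))).
  move=> x; rewrite inE => /andP [xcomp xVG].
  have [k1 Hk1] := compC xcomp.
  have xd : x != d by apply/eqP => xd; apply: dny; rewrite -xd; exists k1.
  have xc1 : descendant par x c1 by exists (j.-1 + k1); rewrite iterD Hk1.
  have dc2 : descendant par d c2 by exists k.-1.
  have e1 : pathcomp par beta k1 x (alpha x) = bt beta y x (alpha x).
    case: k1 Hk1 => [|k1] Hk1; first by rewrite /= in Hk1; rewrite Hk1 /bt eqxx.
    rewrite nlc1 //; first by rewrite Hk1.
    apply: (uniq_traj parr reach) => //=; apply/eqP => H; move/eqP: yr; apply.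
    by rewrite -Hk1 iterS H parr.
  have e2 : pathcomp par beta (k1 + j) x (alpha x) = bt beta w x (alpha x).
    have -> : w = iter (k1 + j) par x by rewrite addnC iterD Hk1.
    apply: nlc1; first by rewrite addn_gt0 j0 orbT.
    apply: (uniq_traj parr reach) => //; first by rewrite addn_gt0 j0 orbT.
    have -> : (k1 + j).-1 = j.-1 + k1 by rewrite -(prednK j0) addnS /= addnC.
    by rewrite iterD Hk1.
  rewrite -e1 -Hk1 -!pathcompD e2.
  case s1 : (side c1).
    apply: (nlc2 x d w c1 c2) => //; try by rewrite /is_child ?c1r ?c2r ?pc1 ?pc2 ?eqxx.
    by move: sides; rewrite s1; case: (side c2).
  rewrite Esym; apply: (nlc2 d x w c2 c1) => //; try by rewrite /is_child ?c1r ?c2r ?pc1 ?pc2 ?eqxx.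
    by rewrite eq_sym.
  by move: sides; rewrite s1; case: (side c2).
by rewrite (key _ uC) (key _ vC) uq vq.
Qed.
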